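(* Let $L$ be a positive integer and let $a,b,s$ be integers with $a\mid L$, $b\mid L$, $0\le s<b$, $s\in\frac{ab}{\gcd(ab,L)}\mathbb{Z}$; let $\Lambda=\begin{pmatrix} a&0\\ s&b\end{pmatrix}\mathbb{Z}_L^2$, $\lambda_2=b/\gcd(b,s)$, $\tilde a=\lambda_2a$, and let $\tilde\Lambda$ be the subgroup of $\mathbb{Z}_L^2$ generated by $(\tilde a,0)^T$ and $(0,b)^T$. Let $g\in\mathbb{C}^L$ and for $0\le m<\lambda_2$ put $g_m=\mathbf M_{ms\bmod b}\mathbf T_{ma}g$. Then for all $f\in\mathbb{C}^L$ $$\mathbf S_{g,\Lambda}f=\sum_{m=0}^{\lambda_2-1}\mathbf S_{g_m,\tilde\Lambda}f .$$ Moreover, for all $f\in\mathbb{C}^L$, $n\in\{0,\dots,L/a-1\}$ and $k\in\{0,\dots,L/b-1\}$, writing $\tilde n=\lfloor n/\lambda_2\rfloor$ and $m=n-\lambda_2\tilde n$, $$\langle f,\mathbf M_{kb+(ms\bmod b)}\mathbf T_{na}g\rangle=e^{-2\pi i\tilde n\tilde a(ms\bmod b)/L}\,\langle f,\mathbf M_{kb}\mathbf T_{\tilde n\tilde a}g_m\rangle .$$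
   Context: Signals are vectors in $\mathbb{C}^L$ indexed by $\mathbb{Z}_L$, with $\langle f,h\rangle=\sum_{l=0}^{L-1}f(l)\overline{h(l)}$. $\mathbf T_xf(l)=f(l-x)$ (indices mod $L$), $\mathbf M_\omega f(l)=e^{2\pi il\omega/L}f(l)$, and $\pi(x,\omega)=\mathbf M_\omega\mathbf T_x$. For $h\in\mathbb{C}^L$ and a subgroup $\Gamma\le\mathbb{Z}_L^2$, the frame operator is $\mathbf S_{h,\Gamma}f=\sum_{(x,\omega)^T\in\Gamma}\langle f,\pi(x,\omega)h\rangle\,\pi(x,\omega)h$. $A\mathbb{Z}_L^2=\{Az\bmod L:z\in\mathbb{Z}_L^2\}$. *)

(* Defs.v *)
From HB Require Import structures.
From mathcomp Require Import all_boot all_order all_algebra.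
From mathcomp Require Import reals trigo.
From mathcomp Require Import complex.
Set Implicit Arguments. Unset Strict Implicit. Unset Printing Implicit Defensive.
Import GRing.Theory Num.Theory.
Local Open Scope ring_scope.
Local Open Scope complex_scope.

(* A signal in C^L indexed by Z_L is represented by a function nat -> R[i];
   index l is read modulo L by the operators below, and the inner product
   only uses the values at 0 <= l < L. *)
Definition signal (R : realType) := nat -> R[i].

Definition cexp (R : realType) (L : nat) (k : int) : R[i] :=
  cos (2 * pi * k%:~R / L%:R) +i* sin (2 * pi * k%:~R / L%:R).

(* T_x f (l) = f(l - x mod L) *)
Definition transl (R : realType) (L x : nat) (f : signal R) : signal R :=
  fun l => f ((l + (L - x %% L)) %% L)%N.

Definition modul (R : realType) (L w : nat) (f : signal R) : signal R :=
  fun l => cexp R L (l * w)%N%:Z * f l.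

Definition tf (R : realType) (L x w : nat) (f : signal R) : signal R :=
  modul L w (transl L x f).

Definition inner (R : realType) (L : nat) (f h : signal R) : R[i] :=
  \sum_(l < L) f l * (h l)^*.

Definition frameop (R : realType) (L : nat) (h : signal R)
    (Gamma : {set 'I_L * 'I_L}) (f : signal R) : signal R :=
  fun l => \sum_(p in Gamma) inner L f (tf L p.1 p.2 h) * tf L p.1 p.2 h l.

(* [[a,0],[s,b]] Z_L^2 = { (a z1 mod L, s z1 + b z2 mod L) } *)
Definition lowtri_lattice (L a s b : nat) : {set 'I_L * 'I_L} :=
  [set p : 'I_L * 'I_L | [exists z1 : 'I_L, exists z2 : 'I_L,
     (p.1 == (a * z1) %% L :> nat)%N && (p.2 == (s * z1 + b * z2) %% L :> nat)%N]].

(* subgroup of Z_L^2 generated by (u1,u2)^T and (v1,v2)^T: all integer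
   combinations i u + j v mod L (coefficients may be taken in Z_L). *)
Definition gen2 (L u1 u2 v1 v2 : nat) : {set 'I_L * 'I_L} :=
  [set p : 'I_L * 'I_L | [exists i : 'I_L, exists j : 'I_L,
     (p.1 == (i * u1 + j * v1) %% L :> nat)%N &&
     (p.2 == (i * u2 + j * v2) %% L :> nat)%N]].

Arguments frameop [R] L%_nat_scope h Gamma%_set_scope f _.

(* Main.v *)
Require Import Defs.
From HB Require Import structures.
From mathcomp Require Import all_boot all_order all_algebra.
From mathcomp Require Import reals trigo.
From mathcomp Require Import complex.
From mathcomp Require Import zify ring lra.
Import GRing.Theory Num.Theory.
Local Open Scope ring_scope.
Local Open Scope complex_scope.
Lemma gt0_of_dvd {L a : nat} : (0 < L)%N -> (a %| L)%N -> (0 < a)%N.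
Proof. by move=> HL Ha; apply: dvdn_gt0 HL Ha. Qed.
Section S1.
Variable R : realType.
Lemma cmul (a b c d : R) : (a +i* b) * (c +i* d) = (a*c - b*d) +i* (a*d + b*c).
Proof. by []. Qed.
Lemma cconj (a b : R) : Num.conj (a +i* b) = a +i* (-b).
Proof. by []. Qed.
Lemma cone : (1 : R[i]) = 1 +i* 0.
Proof. by []. Qed.

Lemma cexpD (L : nat) (x y : int) : cexp R L (x + y) = cexp R L x * cexp R L y.
Proof.
rewrite /cexp intrD mulrDr mulrDl cosD sinD cmul; congr (_ +i* _); ring.
Qed.

Lemma cexpL (L : nat) : (0 < L)%N -> cexp R L L = 1.
Proof.
move=> HL; rewrite /cexp mulfK; last by rewrite pnatr_eq0 -lt0n.
have -> : (2 : R) * pi = pi *+ 2 by rewrite mulr_natl.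
by rewrite cos2pi sin2pi.
Qed.

Lemma cexp_nat_per (L r n : nat) : (0 < L)%N -> cexp R L (n * L + r)%N = cexp R L r.
Proof.
move=> HL; elim: n => [|n IH] //.
by rewrite mulSn -addnA PoszD cexpD cexpL // mul1r.
Qed.

Lemma cexp_modn (L A B : nat) : (0 < L)%N -> (A %% L = B %% L)%N ->
  cexp R L A = cexp R L B.
Proof.
move=> HL E; rewrite (divn_eq A L) (divn_eq B L) !cexp_nat_per // E //.
Qed.

Lemma cexp_conj (L : nat) (k : int) : Num.conj (cexp R L k) = cexp R L (- k).
Proof.
by rewrite /cexp cconj mulrNz !mulrN !mulNr cosN sinN.
Qed.

Lemma cexp_norm (L : nat) (k : int) : cexp R L k * Num.conj (cexp R L k) = 1.
Proof.
rewrite /cexp. rewrite cconj cmul cone; congr (_ +i* _).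
  by rewrite mulrN opprK -!expr2 cos2Dsin2.
ring.
Qed.

Definition idx (L x l : nat) : nat := ((l + (L - x %% L)) %% L)%N.

Lemma idx_lt L x l : (0 < L)%N -> (idx L x l < L)%N.
Proof. by move=> HL; rewrite /idx ltn_pmod. Qed.

Lemma idx_add L x l : (0 < L)%N -> ((idx L x l + x) %% L = l %% L)%N.
Proof.
move=> HL; rewrite /idx modnDml -modnDmr -addnA subnK; last by rewrite ltnW // ltn_pmod.
by rewrite modnDr.
Qed.

Lemma idx_uniq L x l i : (0 < L)%N -> (i < L)%N -> ((i + x) %% L = l %% L)%N ->
  i = idx L x l.
Proof.
move=> HL Hi E.
have : (i + x == idx L x l + x %[mod L])%N by rewrite E idx_add.
by rewrite eqn_modDr !modn_small ?idx_lt // => /eqP.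
Qed.

Lemma idx_comp L x y l : (0 < L)%N -> idx L y (idx L x l) = idx L (x + y) l.
Proof.
move=> HL; apply: idx_uniq => //; first exact: idx_lt.
by rewrite (addnC x y) addnA -modnDml idx_add // modnDml idx_add.
Qed.

Lemma tf_modL (L x w : nat) (h : signal R) : (0 < L)%N ->
  tf L (x %% L) (w %% L) h = tf L x w h.
Proof.
move=> HL; apply: boolp.funext => l; rewrite /tf /modul /transl modn_mod.
by congr (_ * _); apply: cexp_modn => //; rewrite modnMmr.
Qed.

Lemma tf_comp (L x y w1 w2 : nat) (h : signal R) : (0 < L)%N ->
  tf L (x + y) (w1 + w2) h =
  (fun l => tf L x w1 (tf L y w2 h) l * cexp R L (x * w2)%N).
Proof.
move=> HL; apply: boolp.funext => l; rewrite /tf /modul /transl.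
rewrite -/(idx L x l) -/(idx L y (idx L x l)) -/(idx L (x + y) l) idx_comp //.
rewrite (@cexp_modn L (l * (w1 + w2)) (l * w1 + (idx L x l * w2 + x * w2))) //; last first.
  by rewrite mulnDr -modnDmr -[in RHS]modnDmr -mulnDl -(modnMml (idx L x l + x)) idx_add // modnMml.
rewrite !PoszD !cexpD.
ring.
Qed.

Lemma inner_scale (L : nat) (f h : signal R) (c : R[i]) :
  inner L f (fun l => h l * c) = Num.conj c * inner L f h.
Proof.
rewrite /inner mulr_sumr; apply: eq_bigr => i _.
rewrite rmorphM /=. ring.
Qed.

Lemma term_scale (L : nat) (f h : signal R) (k : int) (l : nat) :
  inner L f (fun l => h l * cexp R L k) * (h l * cexp R L k) = inner L f h * h l.
Proof.
rewrite inner_scale -[RHS]mulr1 -(cexp_norm L k); ring.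
Qed.
End S1.

Lemma dvd_b (L a b : nat) : (0 < L)%N -> (a %| L)%N ->
  ((a * b) %/ gcdn (a * b) L %| b)%N.
Proof.
move=> HL Ha.
have HG : (0 < gcdn (a * b) L)%N by rewrite gcdn_gt0 HL orbT.
rewrite dvdn_divLR ?dvdn_gcdl // [(b * _)%N]mulnC dvdn_mul //.
by rewrite dvdn_gcd Ha dvdn_mulr.
Qed.

Lemma key_bs (L a b s : nat) : (0 < L)%N -> (a %| L)%N -> (b %| L)%N ->
  ((a * b) %/ gcdn (a * b) L %| s)%N -> (b %| s * (L %/ a))%N.
Proof.
move=> HL Ha Hb Hd.
have Ha0 := gt0_of_dvd HL Ha.
set G := gcdn (a * b) L.
have HG : (0 < G)%N by rewrite gcdn_gt0 HL orbT.
set d := ((a * b) %/ G)%N.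
have E : (d * (L %/ a) = b * (L %/ G))%N.
  have HaG : (0 < a * G)%N by rewrite muln_gt0 Ha0 HG.
  apply/eqP; rewrite -(eqn_pmul2r HaG).
  have e1 : (L %/ a * a = L)%N by rewrite divnK.
  have e2 : (L %/ G * G = L)%N by rewrite divnK // dvdn_gcdr.
  have e3 : (d * G = a * b)%N by rewrite divnK // dvdn_gcdl.
  apply/eqP.
  have -> : (d * (L %/ a) * (a * G) = (d * G) * (L %/ a * a))%N by ring.
  have -> : (b * (L %/ G) * (a * G) = a * b * (L %/ G * G))%N by ring.
  by rewrite e1 e2 e3.
apply: (@dvdn_trans (d * (L %/ a))).
  by rewrite E dvdn_mulr.
by rewrite dvdn_mul.
Qed.

Lemma key_atil (L a b s : nat) : (0 < L)%N -> (a %| L)%N -> (b %| L)%N -> (s < b)%N ->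
  ((a * b) %/ gcdn (a * b) L %| s)%N -> ((b %/ gcdn b s) * a %| L)%N.
Proof.
move=> HL Ha Hb Hsb Hd.
have Hb0 : (0 < b)%N by case: b Hsb {Hb Hd}.
set G := gcdn (a * b) L.
have HG : (0 < G)%N by rewrite gcdn_gt0 HL orbT.
set d := ((a * b) %/ G)%N.
set g' := gcdn b s.
have Hg' : (0 < g')%N by rewrite gcdn_gt0 Hb0.
have dg : (d %| g')%N by rewrite dvdn_gcd Hd dvd_b.
apply: (@dvdn_trans G); last by rewrite dvdn_gcdr.
rewrite -(dvdn_pmul2r Hg').
have -> : (b %/ g' * a * g' = a * b)%N.
  by rewrite mulnAC divnK ?dvdn_gcdl // mulnC.
have -> : (a * b = d * G)%N by rewrite divnK // dvdn_gcdl.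
by rewrite mulnC dvdn_pmul2l.
Qed.

Lemma key_lam2s (b s : nat) : (b %| (b %/ gcdn b s) * s)%N.
Proof.
by rewrite divn_mulAC ?dvdn_gcdl // -muln_divA ?dvdn_gcdr // dvdn_mulr.
Qed.

Definition ordL {L : nat} (HL : (0 < L)%N) (x : nat) : 'I_L := Ordinal (ltn_pmod x HL).

Lemma ordL_val {L : nat} (HL : (0 < L)%N) (x : nat) : nat_of_ord (ordL HL x) = (x %% L)%N.
Proof. by []. Qed.

Lemma lt_blk {L a n r : nat} : (0 < L)%N -> (a %| L)%N -> (n < L %/ a)%N -> (r < a)%N ->
  (n * a + r < L)%N.
Proof.
move=> HL Ha Hn Hr.
have Ha0 := gt0_of_dvd HL Ha.
have : (n.+1 * a <= L)%N by rewrite -leq_divRL.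
rewrite mulSn; lia.
Qed.

Lemma inj_blk {L a n n' r : nat} : (0 < L)%N -> (a %| L)%N -> (n < L %/ a)%N ->
  (n' < L %/ a)%N -> (r < a)%N -> ((n * a + r) %% L = (n' * a + r) %% L)%N -> n = n'.
Proof.
move=> HL Ha Hn Hn' Hr.
have Ha0 := gt0_of_dvd HL Ha.
rewrite (modn_small (lt_blk HL Ha Hn Hr)) (modn_small (lt_blk HL Ha Hn' Hr)) => /addIn /eqP.
by rewrite eqn_pmul2r // => /eqP.
Qed.

Section S2.
Variable R : realType.

Lemma sum_Lam (L a b s : nat) (HL : (0 < L)%N) (F : 'I_L * 'I_L -> R[i]) :
  (a %| L)%N -> (b %| L)%N -> (s < b)%N -> (b %| s * (L %/ a))%N ->
  \sum_(p in lowtri_lattice L a s b) F p =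
  \sum_(n < L %/ a) \sum_(k < L %/ b)
      F (ordL HL (n * a), ordL HL (k * b + (n * s) %% b)).
Proof.
move=> Ha Hb Hsb Hbs.
have Ha0 := gt0_of_dvd HL Ha.
have Hb0 := gt0_of_dvd HL Hb.
have HLa : (0 < L %/ a)%N by rewrite divn_gt0 // dvdn_leq.
have HLb : (0 < L %/ b)%N by rewrite divn_gt0 // dvdn_leq.
rewrite pair_big /=.
pose phi := fun q : 'I_(L %/ a) * 'I_(L %/ b) =>
  (ordL HL (q.1 * a), ordL HL (q.2 * b + (q.1 * s) %% b)).
have Hinj : {in [set: 'I_(L %/ a) * 'I_(L %/ b)] &, injective phi}.
  move=> [n k] [n' k'] _ _ [/= E1 E2].
  have En : n = n' :> nat.
    by apply: (inj_blk (r := 0) HL Ha) => //; rewrite !addn0.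
  have En' : n = n' by apply: val_inj.
  subst n'.
  have Ek : k = k' :> nat.
    by apply: (inj_blk HL Hb _ _ _ E2) => //; rewrite ltn_pmod.
  by congr pair; apply: val_inj.
have Hset : lowtri_lattice L a s b = phi @: [set: 'I_(L %/ a) * 'I_(L %/ b)].
  apply/setP => -[p1 p2]; rewrite inE; apply/existsP/imsetP.
  - move=> [z1 /existsP [z2 /andP [/eqP E1 /eqP E2]]] /=.
    have [c Hc] := dvdnP Hbs.
    set A := (L %/ a)%N in Hc HLa E1 *.
    set n := (z1 %% A)%N.
    set q := (z1 %/ A)%N.
    set t := ((n * s) %/ b)%N.
    set r := ((n * s) %% b)%N.
    set K := (q * c + t + z2)%N.
    exists (Ordinal (ltn_pmod z1 HLa), Ordinal (ltn_pmod K HLb)); first by rewrite in_setT.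
    have HA : (A * a = L)%N by rewrite divnK.
    have HB : (L %/ b * b = L)%N by rewrite divnK.
    congr pair; apply: val_inj => /=.
      by rewrite E1 -/n muln_modl HA modn_mod mulnC.
    rewrite E2 -/n -/r muln_modl HB modnDml.
    congr modn.
    have e1 : (nat_of_ord z1 = q * A + n)%N by rewrite /q /n -divn_eq.
    have e3 : (n * s = t * b + r)%N by rewrite /t /r -divn_eq.
    have e2 : (s * A * q = c * b * q)%N by rewrite Hc.
    rewrite /K e1; lia.
  - move=> [[n k] _ [-> ->]] /=.
    pose t := ((n * s) %/ b)%N.
    pose r := ((n * s) %% b)%N.
    exists (ordL HL n); apply/existsP.
    exists (ordL HL (k + (L - 1) * t)); apply/andP; split; apply/eqP => /=.
      by rewrite modnMmr mulnC.
    rewrite -[in RHS]modnDm !modnMmr modnDm.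
    have e3 : (n * s = t * b + r)%N by rewrite /t /r -divn_eq.
    have -> : (s * n + b * (k + (L - 1) * t) = t * b * L + (k * b + r))%N.
      have HL1 : (1 <= L)%N by [].
      nia.
    by rewrite modnMDl.
rewrite Hset big_imset //; apply: eq_bigl => q; by rewrite in_setT.
Qed.

Lemma sum_gen2 (L u b : nat) (HL : (0 < L)%N) (F : 'I_L * 'I_L -> R[i]) :
  (u %| L)%N -> (b %| L)%N ->
  \sum_(p in gen2 L u 0 0 b) F p =
  \sum_(n < L %/ u) \sum_(k < L %/ b) F (ordL HL (n * u), ordL HL (k * b)).
Proof.
move=> Ha Hb.
have Ha0 := gt0_of_dvd HL Ha.
have Hb0 := gt0_of_dvd HL Hb.
have HLa : (0 < L %/ u)%N by rewrite divn_gt0 // dvdn_leq.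
have HLb : (0 < L %/ b)%N by rewrite divn_gt0 // dvdn_leq.
rewrite pair_big /=.
pose phi := fun q : 'I_(L %/ u) * 'I_(L %/ b) =>
  (ordL HL (q.1 * u), ordL HL (q.2 * b)).
have Hinj : {in [set: 'I_(L %/ u) * 'I_(L %/ b)] &, injective phi}.
  move=> [n k] [n' k'] _ _ [/= E1 E2].
  have En : n = n' :> nat.
    by apply: (inj_blk (r := 0) HL Ha) => //; rewrite !addn0.
  have Ek : k = k' :> nat.
    by apply: (inj_blk (r := 0) HL Hb) => //; rewrite !addn0.
  by congr pair; apply: val_inj.
have Hset : gen2 L u 0 0 b = phi @: [set: 'I_(L %/ u) * 'I_(L %/ b)].
  apply/setP => -[p1 p2]; rewrite inE; apply/existsP/imsetP.
  - move=> [i /existsP [j /andP [/eqP E1 /eqP E2]]] /=.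
    exists (Ordinal (ltn_pmod i HLa), Ordinal (ltn_pmod j HLb)); first by rewrite in_setT.
    have HA : (L %/ u * u = L)%N by rewrite divnK.
    have HB : (L %/ b * b = L)%N by rewrite divnK.
    congr pair; apply: val_inj => /=.
      by rewrite E1 muln0 addn0 muln_modl HA modn_mod.
    by rewrite E2 muln0 add0n muln_modl HB modn_mod.
  - move=> [[n k] _ [-> ->]] /=.
    exists (ordL HL n); apply/existsP.
    exists (ordL HL k); apply/andP; split; apply/eqP => /=.
      by rewrite muln0 addn0 modnMml.
    by rewrite muln0 add0n modnMml.
rewrite Hset big_imset //; apply: eq_bigl => q; by rewrite in_setT.
Qed.
End S2.

Lemma sum_reindex (R : realType) (N c : nat) (G : nat -> R[i]) :
  \sum_(n < N * c) G n = \sum_(m < c) \sum_(nt < N) G (nt * c + m)%N.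
Proof.
rewrite -(@big_mkord _ 0 +%R (N * c) xpredT G) big_nat_mul exchange_big /=.
rewrite big_mkord; apply: eq_bigr => i _.
rewrite -{1}(add0n (i * c)%N) big_addn mulSn addnK big_mkord.
by apply: eq_bigr => j _; rewrite addnC.
Qed.

Theorem proposition3p2 (R : realType) (L a b s : nat) (g : signal R) :
  (0 < L)%N -> (a %| L)%N -> (b %| L)%N -> (s < b)%N ->
  ((a * b) %/ gcdn (a * b) L %| s)%N ->
  let lam2 := (b %/ gcdn b s)%N in
  let atil := (lam2 * a)%N in
  let Lam := lowtri_lattice L a s b in
  let LamT := gen2 L atil 0 0 b in
  let gm := fun m : nat => tf L (m * a) ((m * s) %% b) g in
  (forall (f : signal R) (l : nat), (l < L)%N ->
     frameop L g Lam f l = \sum_(m < lam2) frameop L (gm m) LamT f l)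
  /\
  (forall (f : signal R) (n k : nat), (n < L %/ a)%N -> (k < L %/ b)%N ->
     let nt := (n %/ lam2)%N in
     let m := (n - lam2 * nt)%N in
     inner L f (tf L (n * a) (k * b + (m * s) %% b) g)
     = cexp R L (- ((nt * atil * ((m * s) %% b))%N%:Z)) *
       inner L f (tf L (nt * atil) (k * b) (gm m))).
Proof.
move=> HL Ha Hb Hsb Hd lam2 atil Lam LamT gm.
have Hbs := @key_bs L a b s HL Ha Hb Hd.
have Hatil : (atil %| L)%N by exact: (@key_atil L a b s HL Ha Hb Hsb Hd).
have Hl2s : (b %| lam2 * s)%N by exact: (key_lam2s b s).
have phase : forall (f : signal R) (n k : nat),
    inner L f (tf L (n * a) (k * b + ((n %% lam2) * s) %% b) g)
    = cexp R L (- (((n %/ lam2) * atil * (((n %% lam2) * s) %% b))%N%:Z)) *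
      inner L f (tf L ((n %/ lam2) * atil) (k * b) (gm (n %% lam2)%N)).
  move=> f n k.
  have -> : (n * a = (n %/ lam2) * atil + (n %% lam2) * a)%N.
    by rewrite {1}(divn_eq n lam2) mulnDl /atil mulnA.
  by rewrite tf_comp // inner_scale cexp_conj.
split.
- move=> f l Hl.
  pose Phi := fun nt m k : nat =>
    inner L f (tf L (nt * atil) (k * b) (gm m)) * tf L (nt * atil) (k * b) (gm m) l.
  have LHS : frameop L g Lam f l =
      \sum_(n < L %/ a) \sum_(k < L %/ b) Phi (n %/ lam2)%N (n %% lam2)%N k.
    rewrite /frameop /Lam (@sum_Lam R L a b s HL
      (fun p => inner L f (tf L p.1 p.2 g) * tf L p.1 p.2 g l) Ha Hb Hsb Hbs).
    apply: eq_bigr => n _; apply: eq_bigr => k _.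
    cbn [fst snd]. rewrite !ordL_val. rewrite tf_modL //.
    have -> : ((n * s) %% b = ((n %% lam2) * s) %% b)%N.
      have [c Hc] := dvdnP Hl2s.
      by rewrite {1}(divn_eq n lam2) mulnDl -mulnA Hc mulnA modnMDl.
    have -> : (n * a = (n %/ lam2) * atil + (n %% lam2) * a)%N.
      by rewrite {1}(divn_eq n lam2) mulnDl /atil mulnA.
    by rewrite tf_comp // term_scale.
  have RHS : \sum_(m < lam2) frameop L (gm m) LamT f l =
      \sum_(m < lam2) \sum_(nt < L %/ atil) \sum_(k < L %/ b) Phi nt m k.
    apply: eq_bigr => m _.
    rewrite /frameop /LamT (@sum_gen2 R L atil b HL
      (fun p => inner L f (tf L p.1 p.2 (gm m)) * tf L p.1 p.2 (gm m) l) Hatil Hb).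
    apply: eq_bigr => n _; apply: eq_bigr => k _.
    cbn [fst snd]. by rewrite !ordL_val tf_modL.
  rewrite LHS RHS.
  have Ha0 := gt0_of_dvd HL Ha.
  have Hb0 := gt0_of_dvd HL Hb.
  have Hlam0 : (0 < lam2)%N.
    rewrite /lam2 divn_gt0; last by rewrite gcdn_gt0 Hb0.
    exact: dvdn_leq Hb0 (dvdn_gcdl b s).
  have EN : (L %/ a = (L %/ atil) * lam2)%N.
    have E : ((L %/ atil) * lam2 * a = L)%N.
      rewrite -mulnA; exact: (divnK Hatil).
    by rewrite -{1}E mulnK.
  rewrite EN (sum_reindex _ _ _ (fun n => \sum_(k < L %/ b) Phi (n %/ lam2)%N (n %% lam2)%N k)).
  apply: eq_bigr => m _; apply: eq_bigr => nt _.
  by rewrite divnMDl // modnMDl (divn_small (ltn_ord m)) (modn_small (ltn_ord m)) addn0.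
- move=> f n k Hn Hk nt m.
  have Em : m = (n %% lam2)%N by rewrite /m /nt {1}(divn_eq n lam2) mulnC addKn.
  rewrite Em /nt; exact: phase.
Qed.
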